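(* Let $n\ge 4$ and let $q$ be a prime power with $q>\frac{n(n-1)^2(n-2)^2}{4}$. Then there exist pairwise distinct $\alpha_1,\dots,\alpha_n\in\mathbb F_q$ such that for every $\mathbf i=(i_1,i_2,i_3),\mathbf j=(j_1,j_2,j_3)\in S_3(n)$ with $d_H(\mathbf i,\mathbf j)\ge2$ there is no pair $(a,b)\in\mathbb F_q^*\times\mathbb F_q$ with $a\alpha_{i_\ell}+b=\alpha_{j_\ell}$ for all $\ell=1,2,3$.
   Context: $S_3(n)=\{(i_1,i_2,i_3)\in\{1,\dots,n\}^3: i_1<i_2<i_3\}$, and $d_H(\mathbf i,\mathbf j)$ is the number of coordinates in which $\mathbf i$ and $\mathbf j$ differ. *)

(* Defs.v *)
From HB Require Import structures.
From mathcomp Require Import all_boot all_order all_algebra.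
Set Implicit Arguments. Unset Strict Implicit. Unset Printing Implicit Defensive.

(* A triple (i_1,i_2,i_3) is encoded as a function 'I_3 -> 'I_n
   (indices 1..n are shifted to 0..n-1). *)

Definition inS3 (n : nat) (i : 'I_3 -> 'I_n) : Prop :=
  forall l1 l2 : 'I_3, l1 < l2 -> i l1 < i l2.

Definition dH (n : nat) (i j : 'I_3 -> 'I_n) : nat :=
  #|[pred l : 'I_3 | i l != j l]|.

(* Main.v *)
Require Import Defs.
From HB Require Import structures.
From mathcomp Require Import all_boot all_order all_algebra.
From mathcomp Require Import zify ring.
Import GRing.Theory.
Set Implicit Arguments. Unset Strict Implicit.
From mathcomp Require Import all_boot all_algebra.
From mathcomp Require Import zify.
Lemma E (m c2 c3 : nat) : 12*(4*(m + c2*c2 + c2*c3 + c3*c2)) = 48 * m + 12*((c2*2)*(c2*2)) + 8*((c2*2)*(c3*6)).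
Proof. rewrite (mulnACA c2 2 c2 2) (mulnACA c2 2 c3 6) (mulnC c3 c2). move: (c2 * c2) (c2 * c3) => p r. lia. Qed.
Lemma K (m u : nat) : 2 <= m -> 2 <= u -> m <= u -> 48 * m + 12 * (u * u) + 8 * (u * (u*(m-2))) <= 12 * (m.+1 * u * u).
Proof. move=> h0 h1 h2.
have h3 : 2 * m <= u * u by apply: leq_mul.
have h5 : 4 <= u * u by apply: (@leq_mul 2 2).
have h4 : u * (u * (m - 2)) + 2 * (u * u) = m * (u * u).
  rewrite mulnA (mulnC 2) -mulnDr mulnC; congr (_ * _); lia.
have h6 : 4 * m <= m * (u * u) by rewrite mulnC leq_mul2l h5 orbT.
have -> : 12 * (m.+1 * u * u) = 12 * (m * (u*u)) + 12 * (u * u) by rewrite -mulnA mulSn; lia.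
move: h3 h4 h6; move: (u * u) (m * (u * u)) (u * (u * (m - 2))) => p r s. lia.
Qed.
Lemma cnt (n m q : nat) : m < n -> 4 <= n -> n * (n - 1) ^ 2 * (n - 2) ^ 2 < 4 * q ->
  m + 'C(m,2) * 'C(m,2) + 'C(m,2) * 'C(m,3) + 'C(m,3) * 'C(m,2) < q.
Proof.
move=> hm hn hq.
have e2 : 'C(m,2) * 2 = m * (m-1).
  by rewrite (bin_ffact m 2) !ffactnS ffactn0; lia.
have e3 : 'C(m,3) * 6 = m * (m-1) * (m-2).
  by rewrite (bin_ffact m 3) !ffactnS ffactn0; case: m {hm e2}=> [|[|m]] /=; lia.
have mono : m.+1 * m ^ 2 * (m - 1) ^ 2 <= n * (n - 1) ^ 2 * (n - 2) ^ 2.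
  apply: leq_mul; first apply: leq_mul => //; rewrite leq_sqr; lia.
case: (leqP m 1) => hm1.
  have : 4 * 3 ^ 2 * 2 ^ 2 <= n * (n - 1) ^ 2 * (n - 2) ^ 2.
    apply: leq_mul; first apply: leq_mul => //; rewrite leq_sqr; lia.
  move=> h144; have : 36 < q by lia.
  rewrite (@bin_small m 2) ?(@bin_small m 3); lia.
have hu : 2 <= m * (m - 1) by apply: (@leq_mul 2 1); lia.
have hu2 : m <= m * (m - 1) by rewrite -{1}(muln1 m) leq_mul2l; lia.
have key := @K m _ hm1 hu hu2.
rewrite -e3 -e2 -E in key.
have em : m.+1 * m ^ 2 * (m - 1) ^ 2 = m.+1 * ('C(m, 2) * 2) * ('C(m, 2) * 2).
  by rewrite e2 !expnS !expn0 !muln1; rewrite -!mulnA; congr (_ * _); rewrite mulnCA mulnA (mulnC m) -mulnA.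
rewrite -em in key.
rewrite leq_mul2l /= in key.
lia.
Qed.
Section S.
Variable F : finFieldType.

Definition badv (p1 p2 p3 q1 q2 q3 : F) : bool :=
  [exists a : F, exists b : F, (a != 0)%R && (a * p1 + b == q1)%R
     && (a * p2 + b == q2)%R && (a * p3 + b == q3)%R].

Definition upd (f : nat -> F) (m : nat) (x : F) (k : nat) : F :=
  if k == m then x else f k.

Lemma upd_lt f m x k : k < m -> upd f m x k = f k.
Proof. by move=> h; rewrite /upd ltn_eqF. Qed.
Lemma upd_m f m x : upd f m x m = x.
Proof. by rewrite /upd eqxx. Qed.

Definition good (m : nat) (f : nat -> F) :=
  (forall k l, k < m -> l < m -> f k = f l -> k = l) /\
  forall i1 i2 i3 j1 j2 j3, i1 < i2 -> i2 < i3 -> i3 < m ->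
    j1 < j2 -> j2 < j3 -> j3 < m ->
    2 <= (i1 != j1) + (i2 != j2) + (i3 != j3) ->
    ~~ badv (f i1) (f i2) (f i3) (f j1) (f j2) (f j3).

Lemma aff (a b a' b' p q p' q' : F) : p != q ->
  (a * p+b = p' -> a * q+b = q' -> a'* p+b' = p' -> a'* q+b' = q' -> a = a' /\ b = b')%R.
Proof.
move=> npq e1 e2 e3 e4.
have h : ((a - a') * (p - q) = (a * p+b) - (a * q+b) - ((a'* p+b') - (a'* q+b')))%R by ring.
rewrite e1 e2 e3 e4 subrr in h.
move/eqP: h; rewrite mulf_eq0 !subr_eq0 (negbTE npq) orbF => /eqP aa.
split=> //; subst a'.
by apply: (addrI (a * p)%R); rewrite e1 e3.
Qed.

Lemma uA (p1 p2 q1 q2 x y : F) : p1 != p2 -> p1 != q1 ->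
  badv p1 p2 x q1 q2 x -> badv p1 p2 y q1 q2 y -> x = y.
Proof.
move=> n12 n11.
move=> /existsP[a /existsP[b /andP[/andP[/andP[a0 /eqP e1] /eqP e2] /eqP e3]]].
move=> /existsP[a' /existsP[b' /andP[/andP[/andP[a0' /eqP e1'] /eqP e2'] /eqP e3']]].
have [ea eb] := aff n12 e1 e2 e1' e2'; subst a' b'.
have a1 : (a - 1 != 0)%R.
  rewrite subr_eq0; apply/eqP => a1; subst a.
  have b0 : b = 0%R.
    by move: e3; rewrite mul1r -{2}[x]addr0 => /addrI.
  by move: n11; rewrite -e1 b0 mul1r addr0 eqxx.
have h : ((a - 1) * (x - y) = (a * x + b) - (a * y + b) - (x - y))%R by ring.
rewrite e3 e3' subrr in h.
move/eqP: h; rewrite mulf_eq0 (negbTE a1) /= subr_eq0 => /eqP //.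
Qed.

Lemma uB1 (p1 p2 q1 q2 q3 x y : F) : p1 != p2 ->
  badv p1 p2 x q1 q2 q3 -> badv p1 p2 y q1 q2 q3 -> x = y.
Proof.
move=> n12.
move=> /existsP[a /existsP[b /andP[/andP[/andP[a0 /eqP e1] /eqP e2] /eqP e3]]].
move=> /existsP[a' /existsP[b' /andP[/andP[/andP[a0' /eqP e1'] /eqP e2'] /eqP e3']]].
have [ea eb] := aff n12 e1 e2 e1' e2'; subst a' b'.
by move: e3'; rewrite -e3 => /addIr /(mulfI a0).
Qed.

Lemma uB2 (p1 p2 p3 q1 q2 x y : F) : p1 != p2 ->
  badv p1 p2 p3 q1 q2 x -> badv p1 p2 p3 q1 q2 y -> x = y.
Proof.
move=> n12.
move=> /existsP[a /existsP[b /andP[/andP[/andP[a0 /eqP e1] /eqP e2] /eqP e3]]].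
move=> /existsP[a' /existsP[b' /andP[/andP[/andP[a0' /eqP e1'] /eqP e2'] /eqP e3']]].
have [ea eb] := aff n12 e1 e2 e1' e2'.
by rewrite -e3 -e3' ea eb.
Qed.

Lemma card_uniq (D : finType) (DS : {set D}) (P : F -> D -> bool) :
  (forall d x y, d \in DS -> P x d -> P y d -> x = y) ->
  #|[set x | [exists d in DS, P x d]]| <= #|DS|.
Proof.
move=> U.
pose f d := odflt 0%R [pick x | P x d].
apply: (leq_trans _ (leq_imset_card f DS)).
apply: subset_leq_card; apply/subsetP => x; rewrite inE => /existsP[d /andP[dD Pxd]].
apply/imsetP; exists d => //; rewrite /f.
case: pickP => [y Pyd | none] /=; first exact: (U d x y).
by move: (none x); rewrite Pxd.
Qed.


Lemma vlt m k (t : k.-tuple 'I_m) i : i < k -> nth 0 (map val t) i < m.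
Proof.
move=> h; have : nth 0 (map val t) i \in map val t.
  by apply: mem_nth; rewrite size_map size_tuple.
by case/mapP => z _ ->; apply: ltn_ord.
Qed.

Lemma sorted2 m (t : 2.-tuple 'I_m) : sorted ltn (map val t) ->
  nth 0 (map val t) 0 < nth 0 (map val t) 1.
Proof. by case: t => [[|a [|b [|]]] //= _]; rewrite andbT. Qed.

Lemma sorted3 m (t : 3.-tuple 'I_m) : sorted ltn (map val t) ->
  nth 0 (map val t) 0 < nth 0 (map val t) 1.
Proof. by case: t => [[|a [|b [|c [|]]]] //= _] /andP[]. Qed.

Lemma sortedk (s : seq nat) : 1 < size s -> sorted ltn s -> nth 0 s 0 < nth 0 s 1.
Proof. by case: s => [|a [|b r]] //= _ /andP[]. Qed.

Lemma cU (T : finType) (A B : {set T}) : #|A :|: B| <= #|A| + #|B|.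
Proof. by rewrite cardsU leq_subr. Qed.

Lemma step (m : nat) (alpha : nat -> F) : good m alpha ->
  m + 'C(m,2) * 'C(m,2) + 'C(m,2) * 'C(m,3) + 'C(m,3) * 'C(m,2) < #|F| ->
  exists x, good m.+1 (upd alpha m x).
Proof.
case=> inj gd hc.
pose v (s : seq 'I_m) k := nth 0 (map val s) k.
pose S2 := [set t : 2.-tuple 'I_m | sorted ltn (map val t)].
pose S3 := [set t : 3.-tuple 'I_m | sorted ltn (map val t)].
pose PA x (d : 2.-tuple 'I_m * 2.-tuple 'I_m) := (v d.1 0 != v d.2 0) &&
  badv (alpha (v d.1 0)) (alpha (v d.1 1)) x (alpha (v d.2 0)) (alpha (v d.2 1)) x.
pose PB1 x (d : 2.-tuple 'I_m * 3.-tuple 'I_m) :=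
  badv (alpha (v d.1 0)) (alpha (v d.1 1)) x (alpha (v d.2 0)) (alpha (v d.2 1)) (alpha (v d.2 2)).
pose PB2 x (d : 3.-tuple 'I_m * 2.-tuple 'I_m) :=
  badv (alpha (v d.1 0)) (alpha (v d.1 1)) (alpha (v d.1 2)) (alpha (v d.2 0)) (alpha (v d.2 1)) x.
pose Bd := [set alpha (val k) | k : 'I_m].
pose BA := [set x | [exists d in setX S2 S2, PA x d]].
pose BB1 := [set x | [exists d in setX S2 S3, PB1 x d]].
pose BB2 := [set x | [exists d in setX S3 S2, PB2 x d]].
have cBd : #|Bd| <= m.
  by apply: (leq_trans (leq_imset_card _ _)); rewrite card_ord.
have d01 k (t : k.-tuple 'I_m) : 1 < k -> sorted ltn (map val t) ->
    alpha (v t 0) != alpha (v t 1).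
  move=> hk st; apply/eqP => /inj; rewrite /v !vlt ?(ltnW hk) // => /(_ isT isT) E.
  by have := @sortedk (map val t); rewrite size_map size_tuple E ltnn => /(_ hk st).
have cBA : #|BA| <= 'C(m,2) * 'C(m,2).
  apply: (leq_trans (card_uniq _)); last by rewrite cardsX card_ltn_sorted_tuples.
  move=> d x y; rewrite inE => /andP[]; rewrite !inE => s1 s2 /andP[n1 bx] /andP[_ byy].
  apply: uA bx byy; first exact: d01 s1.
  by apply/eqP => /inj; rewrite /v !vlt // => /(_ isT isT) /eqP; rewrite (negbTE n1).
have cB1 : #|BB1| <= 'C(m,2) * 'C(m,3).
  apply: (leq_trans (card_uniq _)); last by rewrite cardsX !card_ltn_sorted_tuples.
  move=> d x y; rewrite inE => /andP[]; rewrite !inE => s1 s2 bx byy.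
  by apply: uB1 bx byy; exact: d01 s1.
have cB2 : #|BB2| <= 'C(m,3) * 'C(m,2).
  apply: (leq_trans (card_uniq _)); last by rewrite cardsX !card_ltn_sorted_tuples.
  move=> d x y; rewrite inE => /andP[]; rewrite !inE => s1 s2 bx byy.
  by apply: uB2 bx byy; exact: d01 s1.
have cBad : #|Bd :|: BA :|: BB1 :|: BB2| < #|F|.
  apply: leq_ltn_trans hc.
  apply: (leq_trans (cU _ _)); apply: leq_add => //.
  apply: (leq_trans (cU _ _)); apply: leq_add => //.
  apply: (leq_trans (cU _ _)); apply: leq_add => //.
have : 0 < #|~: (Bd :|: BA :|: BB1 :|: BB2)|.
  move: (cardsC (Bd :|: BA :|: BB1 :|: BB2)) cBad.
  by move=> <-; rewrite -[X in X < _]addn0 ltn_add2l.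
case/card_gt0P => x; rewrite !inE !negb_or => /andP[/andP[/andP[xd xA] xB1] xB2].
exists x; split.
  move=> k l; rewrite !ltnS => hk hl; rewrite /upd.
  case: (eqVneq k m) => [->|km]; case: (eqVneq l m) => [->|lm] //.
  - move=> E; exfalso; move/negP: xd; apply.
    have hl' : l < m by rewrite ltn_neqAle lm.
    by apply/imsetP; exists (Ordinal hl').
  - move=> E; exfalso; move/negP: xd; apply.
    have hk' : k < m by rewrite ltn_neqAle km.
    by apply/imsetP; exists (Ordinal hk').
  - apply: inj; by rewrite ltn_neqAle ?km ?lm.
move=> i1 i2 i3 j1 j2 j3 h12 h23 h3 k12 k23 k3 hd; rewrite ltnS in h3 k3.
have i1m : i1 < m by lia.
have i2m : i2 < m by lia.
have j1m : j1 < m by lia.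
have j2m : j2 < m by lia.
rewrite (upd_lt _ _ i1m) (upd_lt _ _ i2m) (upd_lt _ _ j1m) (upd_lt _ _ j2m).
case: (eqVneq i3 m) => [Ei|Ni]; case: (eqVneq j3 m) => [Ej|Nj].
- subst i3 j3; rewrite upd_m.
  have nij : i1 != j1.
    by apply/negP => /eqP E; move: hd; rewrite E !eqxx /=; case: (i2 != j2).
  apply/negP => B; move/negP: xA; apply; apply/existsP.
  exists ([tuple Ordinal i1m; Ordinal i2m], [tuple Ordinal j1m; Ordinal j2m]).
  rewrite !inE /= h12 k12 /=.
  by rewrite /PA /v /= nij.
- subst i3; have j3m : j3 < m by rewrite ltn_neqAle Nj.
  rewrite upd_m (upd_lt _ _ j3m).
  apply/negP => B; move/negP: xB1; apply; apply/existsP.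
  exists ([tuple Ordinal i1m; Ordinal i2m], [tuple Ordinal j1m; Ordinal j2m; Ordinal j3m]).
  rewrite !inE /= h12 k12 k23 /=.
  by rewrite /PB1 /v /=.
- subst j3; have i3m : i3 < m by rewrite ltn_neqAle Ni.
  rewrite upd_m (upd_lt _ _ i3m).
  apply/negP => B; move/negP: xB2; apply; apply/existsP.
  exists ([tuple Ordinal i1m; Ordinal i2m; Ordinal i3m], [tuple Ordinal j1m; Ordinal j2m]).
  rewrite !inE /= h12 h23 k12 /=.
  by rewrite /PB2 /v /=.
- have i3m : i3 < m by rewrite ltn_neqAle Ni.
  have j3m : j3 < m by rewrite ltn_neqAle Nj.
  rewrite (upd_lt _ _ i3m) (upd_lt _ _ j3m).
  exact: gd.
Qed.

End S.

Lemma build (F : finFieldType) n : 4 <= n -> n * (n - 1) ^ 2 * (n - 2) ^ 2 < 4 * #|F| ->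
  forall m, m <= n -> exists alpha : nat -> F, good m alpha.
Proof.
move=> hn hq; elim=> [|m IH] hm.
  by exists (fun _ => 0%R); split.
have [alpha ga] := IH (ltnW hm).
have [x gx] := step ga (cnt hm hn hq).
by exists (upd alpha m x).
Qed.

Theorem lemma4p7 (F : finFieldType) (n : nat) :
  4 <= n ->
  n * (n - 1) ^ 2 * (n - 2) ^ 2 < 4 * #|F| ->
  exists alpha : 'I_n -> F,
    injective alpha /\
    forall i j : 'I_3 -> 'I_n,
      inS3 i -> inS3 j -> 2 <= dH i j ->
      ~ exists a b : F, (a != 0)%R /\
          forall l : 'I_3, (a * alpha (i l) + b = alpha (j l))%R.
Proof.
move=> hn hq.
have [alpha [inj gd]] := build hn hq (leqnn n).
exists (fun k : 'I_n => alpha k); split.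
  by move=> k l E; apply: val_inj; exact: inj (ltn_ord k) (ltn_ord l) E.
move=> i j si sj hd [a [b [a0 he]]].
move: hd; rewrite /dH -sum1_card big_mkcond /= !big_ord_recl big_ord0 /=.
rewrite !inE /= addn0 addnA -!val_eqE => hd.
set l2 : 'I_3 := lift ord0 (lift ord0 ord0) in hd; set l1 : 'I_3 := lift ord0 ord0 in hd.
have := gd _ _ _ _ _ _ (si ord0 l1 isT) (si l1 l2 isT) (ltn_ord _)
  (sj ord0 l1 isT) (sj l1 l2 isT) (ltn_ord _) hd.
move/negP; apply; apply/existsP; exists a; apply/existsP; exists b.
by rewrite a0 !he !eqxx.
Qed.
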